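(* Let $\underline{R}$, $\underline{T}$ be $n$-tuples of bounded operators on Hilbert spaces $\mathcal{L}$, $\mathcal{M}$ respectively. Then the maximal commuting piece of $(R_1\oplus T_1,\ldots,R_n\oplus T_n)$ on $\mathcal{L}\oplus\mathcal{M}$ is $(R_1^c\oplus T_1^c,\ldots,R_n^c\oplus T_n^c)$ acting on $\mathcal{L}^c\oplus\mathcal{M}^c$, where $\mathcal{L}^c=\mathcal{L}^c(\underline{R})$, $\mathcal{M}^c=\mathcal{M}^c(\underline{T})$. The maximal commuting piece of $(R_1\otimes I,\ldots,R_n\otimes I)$ on $\mathcal{L}\otimes\mathcal{M}$ is $(R_1^c\otimes I,\ldots,R_n^c\otimes I)$ acting on $\mathcal{L}^c\otimes\mathcal{M}$.
   Context: For a tuple $\underline{R}$ on $\mathcal{L}$, $\mathcal{L}^c(\underline{R})$ is the largest closed subspace of $\mathcal{L}$ invariant under every $R_i^*$ such that $R_i^*R_j^*h=R_j^*R_i^*h$ for all $h$ in it and all $i,j$; the maximal commuting piece of $\underline{R}$ is $\underline{R}^c=(R^c_1,\ldots,R^c_n)$ with $R^c_i=P_{\mathcal{L}^c(\underline{R})}R_i|_{\mathcal{L}^c(\underline{R})}$, acting on $\mathcal{L}^c(\underline{R})$. *)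

(* Defs.v *)
From HB Require Import structures.
From mathcomp Require Import all_boot all_order all_algebra.
From mathcomp Require Import complex.
From mathcomp Require Import reals.
From Stdlib Require Import ClassicalEpsilon.
Set Implicit Arguments. Unset Strict Implicit. Unset Printing Implicit Defensive.
Import Order.TTheory GRing.Theory Num.Theory ComplexField.
Local Open Scope ring_scope.

Section Hilbert.
Variable R : realType.
Local Notation C := R[i].
Variable V : lmodType C.
Variable ip : V -> V -> C.  (* inner product, linear in the first slot *)

Definition is_inner : Prop :=
  [/\ (forall (a : C) (x y z : V), ip (a *: x + y) z = a * ip x z + ip y z),
      (forall x y : V, ip y x = Num.conj (ip x y)),
      (forall x : V, 0 <= ip x x) &
      (forall x : V, ip x x = 0 -> x = 0)].

Definition sqnorm (x : V) : R := complex.Re (ip x x).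

Definition converges (u : nat -> V) (h : V) : Prop :=
  forall e : R, 0 < e -> exists N : nat, forall m : nat, (N <= m)%N ->
    sqnorm (u m - h) < e.

Definition cauchy (u : nat -> V) : Prop :=
  forall e : R, 0 < e -> exists N : nat, forall m k : nat, (N <= m)%N -> (N <= k)%N ->
    sqnorm (u m - u k) < e.

Definition is_hilbert : Prop :=
  is_inner /\ forall u, cauchy u -> exists h, converges u h.

Definition is_linear_op (A : V -> V) : Prop :=
  forall (a : C) (x y : V), A (a *: x + y) = a *: A x + A y.

Definition is_bounded_op (A : V -> V) : Prop :=
  is_linear_op A /\ exists c : R, forall x, sqnorm (A x) <= c * sqnorm x.

Definition is_adjoint (A B : V -> V) : Prop :=
  forall x y, ip (A x) y = ip x (B y).

(* the adjoint A^* (chosen; unique for a bounded operator on a Hilbert space) *)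
Definition adj (A : V -> V) : V -> V :=
  epsilon (inhabits (fun x : V => x)) (fun B => is_adjoint A B).

Definition is_subspace (S : V -> Prop) : Prop :=
  S 0 /\ forall (a : C) x y, S x -> S y -> S (a *: x + y).

Definition is_closed (S : V -> Prop) : Prop :=
  forall u h, (forall m, S (u m)) -> converges u h -> S h.

Definition closed_subspace (S : V -> Prop) : Prop :=
  is_subspace S /\ is_closed S.

Definition closed_span (A : V -> Prop) : V -> Prop :=
  fun h => forall S, closed_subspace S -> (forall x, A x -> S x) -> S h.

Definition is_orth_proj (S : V -> Prop) (h p : V) : Prop :=
  S p /\ forall k, S k -> ip (h - p) k = 0.

Definition proj (S : V -> Prop) (h : V) : V :=
  epsilon (inhabits (0 : V)) (fun p => is_orth_proj S h p).

(* compression P_S A |_S  (meaningful for h in S) *)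
Definition compress (S : V -> Prop) (A : V -> V) (h : V) : V := proj S (A h).

Definition comm_admissible (n : nat) (A : 'I_n -> V -> V) (S : V -> Prop) : Prop :=
  [/\ closed_subspace S,
      (forall i h, S h -> S (adj (A i) h)) &
      (forall i j h, S h -> adj (A i) (adj (A j) h) = adj (A j) (adj (A i) h))].

Definition is_max_comm_space (n : nat) (A : 'I_n -> V -> V) (S : V -> Prop) : Prop :=
  comm_admissible A S /\ forall S', comm_admissible A S' -> forall h, S' h -> S h.

End Hilbert.

(* inner product on the orthogonal direct sum L (+) M, realised on L * M *)
Definition sum_ip (R : realType) (L M : lmodType R[i])
  (ipL : L -> L -> R[i]) (ipM : M -> M -> R[i]) (x y : L * M) : R[i] :=
  ipL x.1 y.1 + ipM x.2 y.2.

Definition sum_op (L M : Type) (A : L -> L) (B : M -> M) (x : L * M) : L * M :=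
  (A x.1, B x.2).

Definition prod_set (L M : Type) (S : L -> Prop) (T : M -> Prop) (x : L * M) : Prop :=
  S x.1 /\ T x.2.

(* (H, ipH, tp) is the Hilbert-space tensor product of (L, ipL) and (M, ipM):
   tp is bilinear, <x (x) y, x' (x) y'> = <x,x'><y,y'>, and the elementary
   tensors span a dense subspace of H. *)
Definition is_tensor_product (R : realType) (L M H : lmodType R[i])
  (ipL : L -> L -> R[i]) (ipM : M -> M -> R[i]) (ipH : H -> H -> R[i])
  (tp : L -> M -> H) : Prop :=
  [/\ is_hilbert ipH,
      (forall (a : R[i]) x x' y, tp (a *: x + x') y = a *: tp x y + tp x' y),
      (forall (a : R[i]) x y y', tp x (a *: y + y') = a *: tp x y + tp x y'),
      (forall x x' y y', ipH (tp x y) (tp x' y') = ipL x x' * ipM y y') &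
      (forall h, closed_span ipH (fun k => exists x y, k = tp x y) h)].

Definition is_tensor_id (R : realType) (L M H : lmodType R[i])
  (ipH : H -> H -> R[i]) (tp : L -> M -> H) (A : L -> L) (A' : H -> H) : Prop :=
  is_bounded_op ipH A' /\ forall x y, A' (tp x y) = tp (A x) y.

(* Main.v *)
Require Import Defs.
From HB Require Import structures.
From mathcomp Require Import all_boot all_order all_algebra.
From mathcomp Require Import complex.
From mathcomp Require Import reals.
From mathcomp Require Import classical_sets boolp.
From mathcomp Require Import ring lra.
From Stdlib Require Import ClassicalEpsilon.
Set Implicit Arguments. Unset Strict Implicit. Unset Printing Implicit Defensive.
Import Order.TTheory GRing.Theory Num.Theory.
Local Open Scope ring_scope.

Section Inner.
Variable R : realType.
Local Notation C := R[i].
Local Notation rc x := (real_complex R x).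
Variable V : lmodType C.
Variable ip : V -> V -> C.
Hypothesis Hi : is_inner ip.

Lemma ip_lin a x y z : ip (a *: x + y) z = a * ip x z + ip y z.
Proof. by case: Hi => ? ? ? ?; auto. Qed.
Lemma ipC x y : ip y x = (ip x y)^*.
Proof. by case: Hi => ? ? ? ?; auto. Qed.
Lemma ip_ge0 x : 0 <= ip x x.
Proof. by case: Hi => ? ? ? ?; auto. Qed.
Lemma ip_def x : ip x x = 0 -> x = 0.
Proof. by case: Hi => ? ? ? ?; auto. Qed.

Lemma ip0l z : ip 0 z = 0.
Proof.
have := ip_lin 1 0 0 z; rewrite scaler0 addr0 mul1r.
by rewrite -{1}[ip 0 z]addr0 => /addrI <-.
Qed.
Lemma ipDl x y z : ip (x + y) z = ip x z + ip y z.
Proof. by have := ip_lin 1 x y z; rewrite scale1r mul1r. Qed.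
Lemma ipZl a x z : ip (a *: x) z = a * ip x z.
Proof. by have := ip_lin a x 0 z; rewrite !addr0 ip0l addr0. Qed.
Lemma ipNl x z : ip (- x) z = - ip x z.
Proof. by rewrite -scaleN1r ipZl mulN1r. Qed.
Lemma ipBl x y z : ip (x - y) z = ip x z - ip y z.
Proof. by rewrite ipDl ipNl. Qed.
Lemma ipDr x y z : ip x (y + z) = ip x y + ip x z.
Proof. by rewrite ipC ipDl rmorphD /= -!ipC. Qed.
Lemma ipZr a x y : ip x (a *: y) = a^* * ip x y.
Proof. by rewrite ipC ipZl rmorphM /= -ipC. Qed.
Lemma ip0r x : ip x 0 = 0.
Proof. by rewrite ipC ip0l rmorph0. Qed.
Lemma ipNr x y : ip x (- y) = - ip x y.
Proof. by rewrite ipC ipNl rmorphN /= -ipC. Qed.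
Lemma ipBr x y z : ip x (y - z) = ip x y - ip x z.
Proof. by rewrite ipDr ipNr. Qed.

Lemma ipxx x : ip x x = rc (sqnorm ip x).
Proof.
have := ip_ge0 x; rewrite /sqnorm; case: (ip x x) => a b.
by rewrite lecE /= => /andP[/eqP -> _].
Qed.
Lemma sqnorm_ge0 x : 0 <= sqnorm ip x.
Proof. by have := ip_ge0 x; rewrite ipxx lecR. Qed.
Lemma sqnorm_eq0 x : sqnorm ip x = 0 -> x = 0.
Proof. by move=> h; apply: ip_def; rewrite ipxx h. Qed.
Lemma sqnorm0 : sqnorm ip 0 = 0.
Proof. by rewrite /sqnorm ip0l. Qed.
Lemma ip_eq0 z : (forall k, ip z k = 0) -> z = 0.
Proof. by move=> h; apply: ip_def; rewrite h. Qed.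
Lemma ip_eqr u v : (forall x, ip x u = ip x v) -> u = v.
Proof.
move=> h; apply/eqP; rewrite -subr_eq0; apply/eqP; apply: ip_def.
by rewrite ipBr h subrr.
Qed.
End Inner.
Section T.
Variable R : realType.
Local Notation C := R[i].
Local Notation rc x := (real_complex R x).
Lemma ge0_rc (z : C) : 0 <= z -> z = rc (complex.Re z).
Proof. by case: z => a b; rewrite lecE /= => /andP[/eqP -> _]. Qed.
Lemma conj_rc (r : R) : (rc r)^* = rc r.
Proof. exact: conjc_real. Qed.
Definition nz (z : C) : R := complex.Re (z * z^*).
Lemma nzE z : rc (nz z) = z * z^*.
Proof. by rewrite /nz -ge0_rc // mul_conjC_ge0. Qed.
Lemma nz_ge0 z : 0 <= nz z.
Proof. by rewrite -lecR nzE mul_conjC_ge0. Qed.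
Lemma nz_eq0 z : nz z = 0 -> z = 0.
Proof. by move=> h; apply/eqP; rewrite -mul_conjC_eq0 -nzE h. Qed.
Lemma nz0 : nz 0 = 0.
Proof. by apply: complexI; rewrite nzE mul0r. Qed.
Lemma nzM a b : nz (a * b) = nz a * nz b.
Proof. by apply: complexI; rewrite rmorphM /= !nzE rmorphM /=; ring. Qed.
Lemma nz_rc r : nz (rc r) = r ^+ 2.
Proof. by apply: complexI; rewrite nzE conj_rc rmorphXn /= expr2. Qed.
Lemma nzN z : nz (- z) = nz z.
Proof. by apply: complexI; rewrite !nzE rmorphN /= mulrNN. Qed.
Lemma nzJ z : nz (z^*) = nz z.
Proof. by apply: complexI; rewrite !nzE conjCK mulrC. Qed.
Lemma rc_le (a b : R) : (rc a <= rc b) = (a <= b).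
Proof. exact: lecR. Qed.

Variable V : lmodType C.
Variable ip : V -> V -> C.
Hypothesis Hi : is_inner ip.
Local Notation sq := (sqnorm ip).

Lemma CS x y : nz (ip x y) <= sq x * sq y.
Proof.
have [y0|yn0] := eqVneq y 0.
  by rewrite y0 (ip0r Hi) nz0 (sqnorm0 Hi) mulr0.
have sy : 0 < sq y.
  rewrite lt_def sqnorm_ge0 // andbT; apply/eqP => h; move/eqP: yn0; apply.
  exact: sqnorm_eq0 h.
set a := ip x y; set b := sq y.
have bC : rc b != 0.
  apply/eqP => h; have h' : b = 0 by apply: complexI; rewrite h.
  by move: sy; rewrite -/b h' ltxx.
pose t := a / rc b.
have := ip_ge0 Hi (x - t *: y).
rewrite (ipBl Hi) !(ipBr Hi) !(ipZl Hi) !(ipZr Hi) -/a (ipC Hi x y) -/a (ipxx Hi y) -/b.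
have tJ : t^* = a^* / rc b by rewrite /t rmorphM /= fmorphV /= conj_rc.
have E : ip x x - t^* * a - (t * a^* - t * (t^* * rc b)) = rc (sq x - nz a / b).
  rewrite tJ /t rmorphB rmorphM fmorphV /= nzE (ipxx Hi x); field; exact: bC.
by rewrite E rc_le subr_ge0 ler_pdivrMr.
Qed.
End T.
Section N.
Variable R : realType.
Local Notation C := R[i].
Local Notation rc x := (real_complex R x).
Local Notation Re := (@complex.Re R).

Lemma ReD (a b : C) : Re (a + b) = Re a + Re b.
Proof. by case: a b => [? ?] [? ?]. Qed.
Lemma Re_rc r : Re (rc r) = r.
Proof. by []. Qed.
Lemma Re2_le_nz z : Re z ^+ 2 <= nz z.
Proof. case: z => a b; rewrite /nz /=. nra. Qed.
Lemma ReJ z : Re (z^*) = Re z.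
Proof. by case: z. Qed.

Variable V : lmodType C.
Variable ip : V -> V -> C.
Hypothesis Hi : is_inner ip.
Local Notation sq := (sqnorm ip).

Lemma sq_expand x y : sq (x + y) = sq x + sq y + 2 * Re (ip x y).
Proof.
apply: complexI; rewrite -!(ipxx Hi) !rmorphD /= -!(ipxx Hi).
rewrite (ipDl Hi) !(ipDr Hi) (ipC Hi x y).
set z := ip x y.
have -> : rc (2 * Re z) = z + z^*.
  by case: z => a b; apply/eqP; rewrite eq_complex /=; apply/andP; split; apply/eqP; ring.
ring.
Qed.

Lemma parallelogram x y : sq (x + y) + sq (x - y) = 2 * sq x + 2 * sq y.
Proof.
rewrite !sq_expand (ipNr Hi).
have -> : sqnorm ip (- y) = sq y by rewrite /sqnorm (ipNl Hi) (ipNr Hi) opprK.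
have -> : Re (- ip x y) = - Re (ip x y) by case: (ip x y).
ring.
Qed.

Lemma sqZ a x : sq (a *: x) = nz a * sq x.
Proof.
apply: complexI; rewrite -(ipxx Hi) rmorphM /= nzE -(ipxx Hi).
by rewrite (ipZl Hi) (ipZr Hi) mulrA.
Qed.
Lemma sqN x : sq (- x) = sq x.
Proof. by rewrite /sqnorm (ipNl Hi) (ipNr Hi) opprK. Qed.
Lemma sqB x y : sq (x - y) = sq (y - x).
Proof. by rewrite -sqN opprB. Qed.
Lemma sq_le2 x y : sq (x + y) <= 2 * sq x + 2 * sq y.
Proof. rewrite -parallelogram; have := sqnorm_ge0 Hi (x - y); lra. Qed.

Lemma CSRe x y : Re (ip x y) ^+ 2 <= sq x * sq y.
Proof. exact: le_trans (Re2_le_nz _) (CS Hi x y). Qed.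

End N.
Section D.
Variable R : realType.
Local Notation C := R[i].
Local Notation rc x := (real_complex R x).
Local Notation Re := (@complex.Re R).

Lemma inv_small (e : R) : 0 < e -> exists N : nat, forall m, (N <= m)%N -> (m.+1%:R)^-1 < e.
Proof.
move=> e0; have [k hk] := ltr_add_invr e0; rewrite add0r in hk.
exists k => m km; apply: le_lt_trans hk.
by rewrite lef_pV2 ?posrE ?ltr0Sn // ler_nat ltnS.
Qed.

Lemma small_le0 (x : R) : (forall e, 0 < e -> x <= e) -> x <= 0.
Proof. by move=> h; apply/ler_addgt0Pr => e e0; rewrite add0r; apply: h. Qed.

Variable V : lmodType C.
Variable ip : V -> V -> C.
Hypothesis Hi : is_inner ip.
Local Notation sq := (sqnorm ip).

Lemma sq_small x : (forall e, 0 < e -> sq x < e) -> x = 0.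
Proof.
move=> h; apply: (sqnorm_eq0 Hi); apply/eqP; rewrite eq_le sqnorm_ge0 // andbT.
by apply: small_le0 => e e0; apply/ltW/h.
Qed.

Lemma nz_small (z : C) : (forall e, 0 < e -> nz z < e) -> z = 0.
Proof.
move=> h; apply: nz_eq0; apply/eqP; rewrite eq_le nz_ge0 andbT.
by apply: small_le0 => e e0; apply/ltW/h.
Qed.

Lemma ip_lim u h z w : converges ip u h -> (forall m, ip (u m) z = w) -> ip h z = w.
Proof.
move=> cu hu; apply/eqP; rewrite -subr_eq0; apply/eqP; apply: nz_small => e e0.
have K0 : 0 < sq z + 1 by have := sqnorm_ge0 Hi z; lra.
have [N hN] := cu (e / (sq z + 1)) (divr_gt0 e0 K0).
have := hN N (leqnn N); rewrite -(hu N) -(ipBl Hi) => hlt.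
have := CS Hi (h - u N) z; rewrite (sqB Hi) => hcs.
apply: (le_lt_trans hcs).
have hz := sqnorm_ge0 Hi z; have hu0 := sqnorm_ge0 Hi (u N - h).
have : sq (u N - h) * (sq z + 1) < e by rewrite -ltr_pdivlMr.
nra.
Qed.

Lemma lin0 A : is_linear_op A -> A 0 = 0 :> V.
Proof.
move=> hA; have := hA 1 0 0; rewrite scaler0 addr0 scale1r.
by rewrite -{1}[A 0]addr0 => /addrI <-.
Qed.
Lemma linD A x y : is_linear_op A -> A (x + y) = A x + A y :> V.
Proof. by move=> hA; have := hA 1 x y; rewrite !scale1r. Qed.
Lemma linZ A a x : is_linear_op A -> A (a *: x) = a *: A x :> V.
Proof. by move=> hA; have := hA a x 0; rewrite !addr0 lin0 // addr0. Qed.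
Lemma linB A x y : is_linear_op A -> A (x - y) = A x - A y :> V.
Proof. by move=> hA; rewrite linD // -scaleN1r linZ // scaleN1r. Qed.

Lemma bnd_pos A : is_bounded_op ip A -> exists c, 0 <= c /\ forall x, sq (A x) <= c * sq x.
Proof.
case=> _ [c hc]; exists `|c|; split => // x; apply: (le_trans (hc x)).
by rewrite ler_wpM2r ?sqnorm_ge0 ?ler_norm.
Qed.

Lemma bnd_comp A B : is_bounded_op ip A -> is_bounded_op ip B -> is_bounded_op ip (A \o B).
Proof.
move=> hA hB; split.
  by move=> a x y /=; rewrite hB.1 hA.1.
have [c1 [c10 h1]] := bnd_pos hA; have [c2 [c20 h2]] := bnd_pos hB.
exists (c1 * c2) => x /=; apply: (le_trans (h1 _)); rewrite -mulrA.
by rewrite ler_wpM2l.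
Qed.

Lemma conv_bnd A u h : is_bounded_op ip A -> converges ip u h ->
  converges ip (fun m => A (u m)) (A h).
Proof.
move=> hA cu e e0; have [c [c0 hc]] := bnd_pos hA.
have c1 : 0 < c + 1 by lra.
have [N hN] := cu (e / (c + 1)) (divr_gt0 e0 c1).
exists N => m /hN hm; rewrite -linB; last by case: hA.
apply: (le_lt_trans (hc _)).
have hs := sqnorm_ge0 Hi (u m - h).
have : sq (u m - h) * (c + 1) < e by rewrite -ltr_pdivlMr.
nra.
Qed.

Lemma lim_unique u a b : converges ip u a -> converges ip u b -> a = b.
Proof.
move=> ca cb; apply/eqP; rewrite -subr_eq0; apply/eqP; apply: sq_small => e e0.
have e4 : 0 < e / 4 by rewrite divr_gt0.
have [N1 h1] := ca _ e4; have [N2 h2] := cb _ e4.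
have := h1 (N1 + N2)%N (leq_addr _ _); have := h2 (N1 + N2)%N (leq_addl _ _).
set w := u _ => hb ha.
have -> : a - b = (a - w) + (w - b) by rewrite addrA subrK.
have := sq_le2 Hi (a - w) (w - b); rewrite (sqB Hi a w).
lra.
Qed.

Lemma closed_span_cs A : closed_subspace ip (closed_span ip A).
Proof.
split; first split.
- by move=> S [[]].
- move=> a x y hx hy S hS hA; have hx' := hx S hS hA; have hy' := hy S hS hA.
  by case: hS => [[_ hl] _]; apply: hl.
- move=> u h hu cu S hS hA; have hu' : forall m, S (u m) by move=> m; apply: hu.
  by case: hS => _ hc; apply: (hc u h).
Qed.
Lemma closed_span_sub A x : A x -> closed_span ip A x.
Proof. by move=> hx S _ hA; apply: hA. Qed.
Lemma closed_span_min A S : closed_subspace ip S -> (forall x, A x -> S x) ->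
  forall x, closed_span ip A x -> S x.
Proof. by move=> hS hA x hx; apply: hx. Qed.

Lemma cs_preimage A S : is_bounded_op ip A -> closed_subspace ip S ->
  closed_subspace ip (fun x => S (A x)).
Proof.
move=> hA [[S0 Sl] Sc]; have lA := hA.1; split; first split.
- by rewrite lin0.
- by move=> a x y hx hy; rewrite lA; apply: Sl.
- by move=> u h hu cu; apply: (Sc _ _ hu); apply: conv_bnd.
Qed.

Lemma cs_equalizer A B : is_bounded_op ip A -> is_bounded_op ip B ->
  closed_subspace ip (fun x => A x = B x).
Proof.
move=> hA hB; have lA := hA.1; have lB := hB.1; split; first split.
- by rewrite !lin0.
- by move=> a x y hx hy; rewrite lA lB hx hy.
- move=> u h hu cu; apply: (lim_unique (conv_bnd hA cu)).
  by have := conv_bnd hB cu; congr converges; apply: funext => m; rewrite hu.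
Qed.

Lemma cs_orth z : closed_subspace ip (fun k => ip k z = 0).
Proof.
split; first split.
- exact: ip0l.
- by move=> a x y hx hy; rewrite (ip_lin Hi) hx hy mulr0 addr0.
- by move=> u h hu cu; apply: (ip_lim cu).
Qed.
Lemma cs_orthr z : closed_subspace ip (fun k => ip z k = 0).
Proof.
split; first split.
- exact: ip0r.
- by move=> a x y hx hy; rewrite (ipDr Hi) (ipZr Hi) hx hy mulr0 addr0.
- move=> u h hu cu; rewrite (ipC Hi) (ip_lim (w := 0) cu) ?conjC0 // => m.
  by rewrite (ipC Hi) hu conjC0.
Qed.

End D.
Section E.
Variable R : realType.
Lemma key_min (d A B c e : R) : 0 < e -> 0 <= d -> d <= A -> A < d + e/3 -> A <= d + 1 ->
  0 <= B -> B < e/3 -> B * (36 * (d+1)) < e^+2 -> c^+2 <= A * B -> A + B + 2*c <= d + e.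
Proof.
move=> e0 d0 dA Ae A1 B0 Be Be2 cAB.
have cb : c ^+ 2 * 36 < e ^+ 2 by nra.
have : c < e / 6 by nra.
lra.
Qed.
Lemma key_var (n K eps : R) : 0 <= n -> 0 <= K -> eps * (K + 1) = 1 ->
  0 <= - (2 * eps * n) + eps ^+ 2 * n * K -> n = 0.
Proof.
move=> n0 K0 he h.
have e0 : 0 < eps by nra.
have eK : eps * K = 1 - eps by rewrite -he; ring.
have h2 : - (2 * eps * n) + eps ^+ 2 * n * K = - (eps * n) * (1 + eps).
  by rewrite expr2 -!mulrA [n * K]mulrC !mulrA -[eps * eps * K]mulrA eK; ring.
rewrite h2 in h.
have en : eps * n <= 0 by nra.
apply/eqP; rewrite eq_le n0 andbT; nra.
Qed.
Lemma key_adj (s c t : R) : 0 <= s -> 0 <= c -> 0 <= t -> s ^+ 2 <= c * s * t -> s <= c * t.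
Proof.
move=> s0 c0 t0 h; have [s00|sp] := eqVneq s 0; first by rewrite s00 mulr_ge0.
have sp' : 0 < s by rewrite lt_def sp s0.
rewrite -(ler_pM2r sp'); apply: (le_trans _ (le_trans h _)); first by rewrite expr2.
by rewrite mulrAC.
Qed.
End E.

Section Proj.
Variable R : realType.
Local Notation C := R[i].
Local Notation rc x := (real_complex R x).
Local Notation Re := (@complex.Re R).
Variable V : lmodType C.
Variable ip : V -> V -> C.
Hypothesis Hi : is_inner ip.
Hypothesis Hc : forall u, cauchy ip u -> exists h, converges ip u h.
Local Notation sq := (sqnorm ip).

Lemma subZ S a x : is_subspace S -> S x -> S (a *: x :> V).
Proof. by case=> S0 Sl hx; rewrite -[_ *: _]addr0; apply: Sl. Qed.
Lemma subD S x y : is_subspace S -> S x -> S y -> S (x + y :> V).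
Proof. by case=> S0 Sl hx hy; rewrite -[x]scale1r; apply: Sl. Qed.
Lemma subN S x : is_subspace S -> S x -> S (- x :> V).
Proof. by move=> hS hx; rewrite -scaleN1r; apply: subZ. Qed.
Lemma subB S x y : is_subspace S -> S x -> S y -> S (x - y :> V).
Proof. by move=> hS hx hy; apply: subD => //; apply: subN. Qed.

Lemma nz2 : nz (2 : C) = 4.
Proof.
have -> : (2 : C) = rc 2 by rewrite rmorph_nat.
by rewrite nz_rc; rewrite expr2; ring.
Qed.

Lemma sq_var u k (eps : R) :
  sq (u - (rc eps * ip u k) *: k) = sq u - 2 * eps * nz (ip u k) + eps ^+ 2 * nz (ip u k) * sq k.
Proof.
apply: complexI.
rewrite -(ipxx Hi) (ipBl Hi) !(ipBr Hi) !(ipZl Hi) !(ipZr Hi) (ipC Hi u k).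
rewrite (ipxx Hi u) (ipxx Hi k) rmorphM /= conj_rc.
rewrite expr2 !rmorphD !rmorphN !rmorphM /= !nzE rmorph_nat; ring.
Qed.

Lemma proj_exists S h : closed_subspace ip S -> exists p, is_orth_proj ip S h p.
Proof.
move=> [hS Scl].
pose D := fun r : R => exists s, S s /\ r = sq (h - s).
have hD0 : D (sq (h - 0)) by exists 0; split => //; case: hS.
have hlb : has_lbound D by exists 0 => r [s [_ ->]]; exact: sqnorm_ge0.
have hinf : has_inf D by split => //; exists (sq (h - 0)).
set d := inf D.
have dle : forall s, S s -> d <= sq (h - s).
  by move=> s hs; apply: (ge_inf hlb); exists s.
have d0 : 0 <= d by apply: lb_le_inf; [exists (sq (h - 0)) | move=> r [s [_ ->]]; exact: sqnorm_ge0].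
pose P m s := S s /\ sq (h - s) < d + (m.+1%:R)^-1.
have exP : forall m, exists s, P m s.
  move=> m; have im : 0 < (m.+1%:R : R)^-1 by rewrite invr_gt0 ltr0Sn.
  have [r [s [hs ->]] hr] := inf_adherent im hinf.
  by exists s.
pose s m := epsilon (inhabits 0) (P m).
have hs : forall m, P m (s m) by move=> m; apply: epsilon_spec.
have em1 : forall m : nat, (m.+1%:R)^-1 <= 1 :> R.
  by move=> m; rewrite invf_le1 ?ltr0Sn // ler1n.
have vec : forall m k, (h - s m) + (h - s k) = (2 : C) *: (h - (2 : C)^-1 *: (s m + s k)).
  move=> m k; rewrite scalerBr scalerA mulfV ?pnatr_eq0 // scale1r.
  by rewrite scaler_nat mulr2n opprD addrACA.
have cauchy_s : forall m k, sq (s m - s k) <= 2 * (m.+1%:R)^-1 + 2 * (k.+1%:R)^-1.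
  move=> m k; have := parallelogram Hi (h - s m) (h - s k).
  rewrite vec (sqZ Hi) nz2.
  have -> : h - s m - (h - s k) = s k - s m by rewrite opprB addrC addrA subrK.
  rewrite (sqB Hi (s k)).
  have hmid : S ((2 : C)^-1 *: (s m + s k)) by apply: subZ => //; apply: subD => //; [exact: (hs m).1 | exact: (hs k).1].
  have := dle _ hmid; have := (hs m).2; have := (hs k).2.
  move: (m.+1%:R^-1) (k.+1%:R^-1) => y z; lra.
have cs : cauchy ip s.
  move=> e e0; have [N hN] := inv_small (divr_gt0 e0 (ltr0Sn R 3)).
  exists N => m k hm hk; apply: (le_lt_trans (cauchy_s m k)).
  have := hN m hm; have := hN k hk.
  move: (m.+1%:R^-1) (k.+1%:R^-1) => y z; lra.
have [p cp] := Hc cs.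
have Sp : S p by apply: (Scl s) => // m; exact: (hs m).1.
have pmin : sq (h - p) <= d.
  apply/ler_addgt0Pr => e e0.
  have [N1 h1] := inv_small (divr_gt0 e0 (ltr0Sn R 2)).
  have [N2 h2] := cp _ (divr_gt0 e0 (ltr0Sn R 2)).
  have e2 : 0 < e ^+ 2 / (36 * (d + 1)) by rewrite divr_gt0 ?exprn_gt0 // mulr_gt0 //; lra.
  have [N3 h3] := cp _ e2.
  pose m := (N1 + N2 + N3)%N.
  have hm1 := h1 m (leq_trans (leq_addr N2 N1) (leq_addr _ _)).
  have hm2 := h2 m (leq_trans (leq_addl N1 N2) (leq_addr _ _)).
  have hm3 := h3 m (leq_addl _ _).
  have -> : h - p = (h - s m) + (s m - p) by rewrite addrA subrK.
  rewrite sq_expand //.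
  apply: key_min => //.
  - by apply: dle; exact: (hs m).1.
  - by apply: (lt_trans (hs m).2); rewrite ltrD2l.
  - by apply: (le_trans (ltW (hs m).2)); rewrite lerD2l.
  - exact: sqnorm_ge0.
  - by rewrite -ltr_pdivlMr // mulr_gt0 //; lra.
  - apply: (le_trans (CSRe Hi _ _)); done.
exists p; split => // k Sk.
set u := h - p; set w := ip u k.
have K0 := sqnorm_ge0 Hi k.
have K1 : 0 < sq k + 1 by lra.
pose eps := (sq k + 1)^-1.
have he : eps * (sq k + 1) = 1 by rewrite mulVf // gt_eqF.
pose t := rc eps * w.
have St : S (p + t *: k) by apply: subD => //; apply: subZ.
have := dle _ St.
have -> : h - (p + t *: k) = u - t *: k by rewrite opprD addrA.
move=> hle; have {hle} hle := le_trans pmin hle.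
have expand := sq_var u k eps.
have hle' : sq u <= sq u - 2 * eps * nz w + eps ^+ 2 * nz w * sq k.
  by move: hle; rewrite expand.
apply: nz_eq0; apply: (key_var (nz_ge0 w) K0 he); lra.
Qed.
End Proj.
Section F.
Variable R : realType.
Local Notation C := R[i].
Local Notation rc x := (real_complex R x).
Variable V : lmodType C.
Variable ip : V -> V -> C.
Hypothesis Hi : is_inner ip.
Local Notation sq := (sqnorm ip).

Lemma proj_unique S h p q : is_subspace S -> is_orth_proj ip S h p -> is_orth_proj ip S h q -> p = q.
Proof.
move=> hS [Sp hp] [Sq hq]; apply/eqP; rewrite -subr_eq0; apply/eqP; apply: (ip_def Hi).
have Spq : S (p - q) by apply: subB.
have -> : ip (p - q) (p - q) = ip (h - q) (p - q) - ip (h - p) (p - q).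
  have e : (h - q) - (h - p) = p - q by rewrite opprB addrC addrA subrK.
  by rewrite -(ipBl Hi) e.
by rewrite hp // hq // subrr.
Qed.

Lemma proj_eq S h p : is_subspace S -> is_orth_proj ip S h p -> proj ip S h = p.
Proof.
move=> hS hp; apply: (proj_unique hS _ hp).
by apply: epsilon_spec; exists p.
Qed.

Lemma adj_uniq0 A B : is_adjoint ip A B -> adj ip A = B.
Proof.
move=> hB; have hs : is_adjoint ip A (adj ip A) by apply: epsilon_spec; exists B.
apply: funext => y; apply: (ip_eqr Hi) => x.
by rewrite -hs hB.
Qed.

Hypothesis Hc : forall u, cauchy ip u -> exists h, converges ip u h.

Lemma proj_spec S h : closed_subspace ip S -> is_orth_proj ip S h (proj ip S h).
Proof. by move=> hS; apply: epsilon_spec; apply: proj_exists. Qed.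

Lemma riesz (f : V -> C) :
  (forall a x y, f (a *: x + y) = a * f x + f y) ->
  (exists K, forall x, nz (f x) <= K * sq x) ->
  exists z, forall x, f x = ip x z.
Proof.
move=> fl [K0 hK0].
have hK : forall x, nz (f x) <= `|K0| * sq x.
  by move=> x; apply: (le_trans (hK0 x)); rewrite ler_wpM2r ?sqnorm_ge0 ?ler_norm.
set K := `|K0|.
have f0 : f 0 = 0.
  have := fl 1 0 0; rewrite scaler0 addr0 mul1r.
  by rewrite -{1}[f 0]addr0 => /addrI <-.
have fB : forall x y, f (x - y) = f x - f y.
  move=> x y; have := fl (-1) y x; rewrite scaleN1r addrC => ->.
  by rewrite mulN1r addrC.
pose N := fun x => f x = 0.
have hN : closed_subspace ip N.
  split; first split.
  - exact: f0.
  - by move=> a x y hx hy; rewrite /N fl hx hy mulr0 addr0.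
  - move=> u h hu cu; rewrite /N; apply: nz_small => e e0.
    have K1 : 0 < K + 1 by rewrite /K; have := normr_ge0 K0; lra.
    have [M hM] := cu (e / (K + 1)) (divr_gt0 e0 K1).
    have hm := hM M (leqnn M).
    have -> : f h = - f (u M - h) by rewrite fB hu sub0r opprK.
    rewrite nzN; apply: (le_lt_trans (hK _)).
    have := sqnorm_ge0 Hi (u M - h); have := normr_ge0 K0; rewrite -/K => k0 s0.
    have : sq (u M - h) * (K + 1) < e by rewrite -ltr_pdivlMr.
    nra.
have [allz|] := pselect (forall x, f x = 0).
  by exists 0 => x; rewrite allz (ip0r Hi).
move=> /existsNP [x0 fx0].
have [Np hp] := proj_spec x0 hN.
set p := proj ip N x0 in Np hp.
set z0 := x0 - p.
have fz0 : f z0 != 0 by rewrite /z0 fB Np subr0; apply/eqP.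
have z0n : ip z0 z0 != 0.
  apply/eqP => /(ip_def Hi) h0; move: fz0; rewrite h0 f0 eqxx //.
exists (((f z0) / ip z0 z0)^* *: z0) => x.
rewrite (ipZr Hi) conjCK.
pose y := x - (f x / f z0) *: z0.
have fZ : forall a x, f (a *: x) = a * f x.
  by move=> a x'; have := fl a x' 0; rewrite addr0 f0 addr0.
have Ny : N y by rewrite /N /y fB fZ divfK ?subrr.
have h1 : ip z0 y = 0 by apply: hp.
have h2 : ip y z0 = 0 by rewrite (ipC Hi) h1 conjC0.
move: h2; rewrite /y (ipBl Hi) (ipZl Hi) => /eqP; rewrite subr_eq0 => /eqP ->.
by field; apply/andP; split.
Qed.

Lemma adj_exists A : is_bounded_op ip A -> exists B, is_adjoint ip A B.
Proof.
move=> hA; have [c [c0 hc]] := bnd_pos Hi hA.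
have ex : forall y, exists z, forall x, ip (A x) y = ip x z.
  move=> y; apply: riesz.
    by move=> a x x'; rewrite hA.1 (ip_lin Hi).
  exists (c * sq y) => x; apply: (le_trans (CS Hi _ _)).
  have := hc x; have := sqnorm_ge0 Hi y; have := sqnorm_ge0 Hi x; have := sqnorm_ge0 Hi (A x).
  nra.
exists (fun y => epsilon (inhabits 0) (fun z => forall x, ip (A x) y = ip x z)).
by move=> x y; apply: (epsilon_spec (inhabits 0) (fun z => forall x, ip (A x) y = ip x z) (ex y)).
Qed.

Lemma adj_spec A : is_bounded_op ip A -> is_adjoint ip A (adj ip A).
Proof. by move=> hA; apply: epsilon_spec; apply: adj_exists. Qed.

Lemma adj_uniq A B : is_bounded_op ip A -> is_adjoint ip A B -> adj ip A = B.
Proof.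
move=> hA hB; apply: funext => y; apply: (ip_eqr Hi) => x.
by rewrite -(adj_spec hA) hB.
Qed.

Lemma adj_bnd A : is_bounded_op ip A -> is_bounded_op ip (adj ip A).
Proof.
move=> hA; have hs := adj_spec hA; set B := adj ip A in hs *.
split.
  move=> a y y'; apply: (ip_eqr Hi) => x.
  by rewrite -hs (ipDr Hi) (ipZr Hi) (ipDr Hi) (ipZr Hi) -!hs.
have [c [c0 hc]] := bnd_pos Hi hA.
exists c => y; apply: key_adj => //; try exact: sqnorm_ge0.
have e : rc (sq (B y)) = ip (A (B y)) y by rewrite hs (ipxx Hi).
have := CS Hi (A (B y)) y; rewrite -e nz_rc => h.
apply: (le_trans h); rewrite ler_wpM2r ?sqnorm_ge0 //.
Qed.
End F.
Section G.
Variable R : realType.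
Local Notation C := R[i].
Variable V : lmodType C.
Variable ip : V -> V -> C.
Hypothesis Hi : is_inner ip.
Hypothesis Hc : forall u, cauchy ip u -> exists h, converges ip u h.

Lemma max_from_gen n (A : 'I_n -> V -> V) (hA : forall k, is_bounded_op ip (A k))
  Lc (hLc : is_max_comm_space ip A Lc) (G : V -> Prop) :
  (forall i x, G x -> G (adj ip (A i) x)) ->
  (forall i j x, G x -> adj ip (A i) (adj ip (A j) x) = adj ip (A j) (adj ip (A i) x)) ->
  forall x, G x -> Lc x.
Proof.
move=> hG1 hG2 x gx; apply: (hLc.2 (closed_span ip G)); last exact: closed_span_sub.
split.
- exact: closed_span_cs.
- move=> i; apply: (closed_span_min (S := fun x => closed_span ip G (adj ip (A i) x))).
    exact: (cs_preimage Hi (adj_bnd Hi Hc (hA i)) (closed_span_cs ip G)).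
  by move=> y gy; apply: closed_span_sub; apply: hG1.
- move=> i j; apply: (closed_span_min (S := fun x => (adj ip (A i) \o adj ip (A j)) x = (adj ip (A j) \o adj ip (A i)) x)).
    by apply: cs_equalizer => //; apply: bnd_comp => //; apply: adj_bnd.
  by move=> y gy; apply: hG2.
Qed.
End G.
Section H.
Variable R : realType.
Local Notation C := R[i].
Local Notation rc x := (real_complex R x).
Variables (L M : lmodType C) (ipL : L -> L -> C) (ipM : M -> M -> C).
Hypothesis HL : is_inner ipL.
Hypothesis HM : is_inner ipM.
Local Notation sip := (sum_ip ipL ipM).

Lemma sum_inner : is_inner sip.
Proof.
split.
- by move=> a x y z; rewrite /sum_ip /= !(ip_lin HL) !(ip_lin HM); ring.
- by move=> x y; rewrite /sum_ip rmorphD /= -!(ipC HL) -!(ipC HM).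
- by move=> x; rewrite /sum_ip addr_ge0 // ip_ge0.
- case=> x1 x2; rewrite /sum_ip /= (ipxx HL) (ipxx HM) -rmorphD => h.
  have h' : sqnorm ipL x1 + sqnorm ipM x2 = 0 by apply: complexI; rewrite h.
  have := sqnorm_ge0 HL x1; have := sqnorm_ge0 HM x2 => h2 h1.
  have e1 : sqnorm ipL x1 = 0 by lra.
  have e2 : sqnorm ipM x2 = 0 by lra.
  by rewrite (sqnorm_eq0 HL e1) (sqnorm_eq0 HM e2).
Qed.

Lemma sq_sum x : sqnorm sip x = sqnorm ipL x.1 + sqnorm ipM x.2.
Proof. by rewrite /sqnorm /sum_ip ReD. Qed.

Lemma conv_fst u h : converges sip u h -> converges ipL (fun m => (u m).1) h.1.
Proof.
move=> cu e e0; have [N hN] := cu e e0; exists N => m /hN.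
rewrite sq_sum /=; have := sqnorm_ge0 HM ((u m - h).2); lra.
Qed.
Lemma conv_snd u h : converges sip u h -> converges ipM (fun m => (u m).2) h.2.
Proof.
move=> cu e e0; have [N hN] := cu e e0; exists N => m /hN.
rewrite sq_sum /=; have := sqnorm_ge0 HL ((u m - h).1); lra.
Qed.

Lemma prod_closed SL SM : closed_subspace ipL SL -> closed_subspace ipM SM ->
  closed_subspace sip (prod_set SL SM).
Proof.
move=> [[L0 Ll] Lcl] [[M0 Ml] Mcl]; split; first split.
- by split.
- by move=> a x y [hx1 hx2] [hy1 hy2]; split; [apply: Ll | apply: Ml].
- move=> u h hu cu; split.
    by apply: (Lcl _ _ _ (conv_fst cu)) => m; case: (hu m).
  by apply: (Mcl _ _ _ (conv_snd cu)) => m; case: (hu m).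
Qed.

Lemma sum_bnd A B : is_bounded_op ipL A -> is_bounded_op ipM B -> is_bounded_op sip (sum_op A B).
Proof.
move=> hA hB; split.
  by move=> a x y; rewrite /sum_op /= hA.1 hB.1.
have [c1 [c10 h1]] := bnd_pos HL hA; have [c2 [c20 h2]] := bnd_pos HM hB.
exists (c1 + c2) => x; rewrite !sq_sum /=.
have := h1 x.1; have := h2 x.2; have := sqnorm_ge0 HL x.1; have := sqnorm_ge0 HM x.2.
nra.
Qed.

Lemma sum_adj A B A' B' : is_adjoint ipL A A' -> is_adjoint ipM B B' ->
  adj sip (sum_op A B) = sum_op A' B'.
Proof.
move=> hA hB; apply: (adj_uniq0 sum_inner) => x y.
by rewrite /sum_ip /sum_op /= hA hB.
Qed.
End H.
Section I.
Variable R : realType.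
Local Notation C := R[i].

Lemma part_sum (n : nat)
  (L M : lmodType R[i]) (ipL : L -> L -> R[i]) (ipM : M -> M -> R[i])
  (HL : is_hilbert ipL) (HM : is_hilbert ipM)
  (Rop : 'I_n -> L -> L) (Top : 'I_n -> M -> M)
  (HR : forall k, is_bounded_op ipL (Rop k))
  (HT : forall k, is_bounded_op ipM (Top k))
  (Lc : L -> Prop) (Mc : M -> Prop)
  (HLc : is_max_comm_space ipL Rop Lc)
  (HMc : is_max_comm_space ipM Top Mc) :
  is_max_comm_space (sum_ip ipL ipM) (fun k => sum_op (Rop k) (Top k))
       (prod_set Lc Mc)
   /\ forall k (x : L) (y : M), Lc x -> Mc y ->
       compress (sum_ip ipL ipM) (prod_set Lc Mc) (sum_op (Rop k) (Top k)) (x, y)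
       = sum_op (compress ipL Lc (Rop k)) (compress ipM Mc (Top k)) (x, y).
Proof.
case: HL => HiL HcL; case: HM => HiM HcM.
have adjS : forall k, adj (sum_ip ipL ipM) (sum_op (Rop k) (Top k)) =
    sum_op (adj ipL (Rop k)) (adj ipM (Top k)).
  by move=> k; apply: (sum_adj HiL HiM); [exact: (adj_spec HiL HcL (HR k)) | exact: (adj_spec HiM HcM (HT k))].
case: (HLc) => -[LcS Linv Lcomm] Lmax; case: (HMc) => -[McS Minv Mcomm] Mmax.
split; first split.
- split.
  + exact: (prod_closed HiL HiM).
  + by move=> i h [h1 h2]; rewrite adjS; split; [apply: Linv | apply: Minv].
  + by move=> i j h [h1 h2]; rewrite !adjS /sum_op /= Lcomm // Mcomm.
- move=> S' [_ Sinv Scomm] [h1 h2] hh; split.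
  + apply: (max_from_gen HiL HcL HR HLc (G := fun a => exists b, S' (a, b))).
    * move=> i a [b hab]; exists (adj ipM (Top i) b).
      by have := Sinv i _ hab; rewrite adjS.
    * move=> i j a [b hab]; have := Scomm i j _ hab; rewrite !adjS /sum_op /=.
      by case.
    * by exists h2.
  + apply: (max_from_gen HiM HcM HT HMc (G := fun b => exists a, S' (a, b))).
    * move=> i b [a hab]; exists (adj ipL (Rop i) a).
      by have := Sinv i _ hab; rewrite adjS.
    * move=> i j b [a hab]; have := Scomm i j _ hab; rewrite !adjS /sum_op /=.
      by case.
    * by exists h1.
- move=> k x y hx hy; rewrite /compress; apply: (proj_eq (sum_inner HiL HiM)).
  + exact: (prod_closed HiL HiM LcS McS).1.
  + have [p1 o1] := proj_spec HiL HcL (Rop k x) LcS.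
    have [p2 o2] := proj_spec HiM HcM (Top k y) McS.
    split; first by split.
    by case=> k1 k2 [hk1 hk2]; rewrite /sum_ip /sum_op /= o1 // o2 // addr0.
Qed.
End I.
Section J.
Variable R : realType.
Local Notation C := R[i].
Local Notation rc x := (real_complex R x).

Lemma part_tensor (n : nat)
  (L M : lmodType R[i]) (ipL : L -> L -> R[i]) (ipM : M -> M -> R[i])
  (HL : is_hilbert ipL) (HM : is_hilbert ipM)
  (Rop : 'I_n -> L -> L)
  (HR : forall k, is_bounded_op ipL (Rop k))
  (Lc : L -> Prop)
  (HLc : is_max_comm_space ipL Rop Lc)
  (H : lmodType R[i]) (ipH : H -> H -> R[i]) (tp : L -> M -> H)
  (Htp : is_tensor_product ipL ipM ipH tp)
  (RI : 'I_n -> H -> H)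
  (HRI : forall k, is_tensor_id ipH tp (Rop k) (RI k)) :
  (let K := closed_span ipH (fun h => exists x y, Lc x /\ h = tp x y) in
   is_max_comm_space ipH RI K
   /\ forall k (x : L) (y : M), Lc x ->
       compress ipH K (RI k) (tp x y) = tp (compress ipL Lc (Rop k) x) y).
Proof.
move=> K.
case: Htp => -[HiH HcH] tl1 tl2 tip dense.
case: HL => HiL HcL; case: HM => HiM HcM.
case: (HLc) => -[LcS Linv Lcomm] Lmax.
have tp0 : forall y, tp 0 y = 0.
  move=> y; have := tl1 1 0 0 y; rewrite scaler0 addr0 scale1r.
  by rewrite -{1}[tp 0 y]addr0 => /addrI <-.
have tpD : forall x x' y, tp (x + x') y = tp x y + tp x' y.
  by move=> x x' y; have := tl1 1 x x' y; rewrite !scale1r.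
have tpB : forall x x' y, tp (x - x') y = tp x y - tp x' y.
  move=> x x' y; have := tl1 (-1) x' x y; rewrite !scaleN1r.
  by rewrite addrC => ->; rewrite addrC.
pose A k := adj ipL (Rop k).
pose B k := adj ipH (RI k).
have hA : forall k, is_adjoint ipL (Rop k) (A k) by move=> k; apply: (adj_spec HiL HcL (HR k)).
have hB : forall k, is_adjoint ipH (RI k) (B k) by move=> k; apply: (adj_spec HiH HcH (HRI k).1).
have edense : forall z, (forall x y, ipH (tp x y) z = 0) -> z = 0.
  move=> z hz; apply: (ip_def HiH).
  apply: (closed_span_min (cs_orth HiH z) _ (dense z)).
  by move=> k [x [y ->]]; apply: hz.
have BT : forall k x y, B k (tp x y) = tp (A k x) y.
  move=> k x y; apply/eqP; rewrite -subr_eq0; apply/eqP; apply: edense => x' y'.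
  by rewrite (ipBr HiH) -(hB k) (HRI k).2 !tip -(hA k) subrr.
pose Gk := fun h => exists x y, Lc x /\ h = tp x y.
have KS : closed_subspace ipH K := closed_span_cs ipH Gk.
split; first split.
- split.
  + exact: KS.
  + move=> i; apply: (closed_span_min (S := fun h => K (B i h))).
      exact: (cs_preimage HiH (adj_bnd HiH HcH (HRI i).1) KS).
    move=> _ [x [y [hx ->]]]; rewrite BT; apply: closed_span_sub.
    by exists (A i x), y; split => //; apply: Linv.
  + move=> i j; apply: (closed_span_min (S := fun h => (B i \o B j) h = (B j \o B i) h)).
      by apply: (cs_equalizer HiH); apply: (bnd_comp HiH); apply: (adj_bnd HiH HcH (HRI _).1).
    by move=> _ [x [y [hx ->]]] /=; rewrite !BT /A Lcomm.
- move=> S' [_ Sinv Scomm] h hh.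
  have sqT : forall x y, sqnorm ipH (tp x y) = sqnorm ipL x * sqnorm ipM y.
    move=> x y; apply: complexI; rewrite -(ipxx HiH) tip (ipxx HiL) (ipxx HiM).
    by rewrite rmorphM.
  have exphi : forall y h, exists z, forall x, ipH (tp x y) h = ipL x z.
    move=> y h'; apply: (riesz HiL HcL).
      by move=> a x x'; rewrite tl1 (ip_lin HiH).
    exists (sqnorm ipM y * sqnorm ipH h') => x; apply: (le_trans (CS HiH _ _)).
    by rewrite sqT [X in _ <= X]mulrC mulrA.
  pose phi y h := epsilon (inhabits 0) (fun z => forall x, ipH (tp x y) h = ipL x z).
  have hphi : forall y h x, ipH (tp x y) h = ipL x (phi y h).
    by move=> y h' x; apply: (epsilon_spec (inhabits 0) (fun z => forall x, ipH (tp x y) h' = ipL x z) (exphi y h')).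
  have phiB : forall i y h, adj ipL (Rop i) (phi y h) = phi y (adj ipH (RI i) h).
    move=> i y h'; apply: (ip_eqr HiL) => x.
    by rewrite -(hA i) -!hphi -(HRI i).2 hB.
  have Lphi : forall y h, S' h -> Lc (phi y h).
    move=> y h' hh'.
    apply: (max_from_gen HiL HcL HR HLc (G := fun a => exists y h, S' h /\ a = phi y h)).
    + move=> i _ [y1 [h1 [hh1 ->]]]; exists y1, (B i h1); split; first exact: Sinv.
      exact: phiB.
    + by move=> i j _ [y1 [h1 [hh1 ->]]]; rewrite !phiB Scomm.
    + by exists y, h'.
  have [Kp hp] := proj_spec HiH HcH h KS.
  set p := proj ipH K h in Kp hp.
  have hp0 : h - p = 0.
    apply: edense => x y.
    have [Lq hq] := proj_spec HiL HcL x LcS.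
    set q := proj ipL Lc x in Lq hq.
    have -> : tp x y = tp q y + tp (x - q) y by rewrite -tpD addrC subrK.
    rewrite (ipDl HiH) (ipC HiH) hp; last by apply: closed_span_sub; exists q, y.
    rewrite conjC0 add0r (ipBr HiH) hphi (hq _ (Lphi y h hh)) sub0r.
    have : ipH (tp (x - q) y) p = 0.
      apply: (closed_span_min (cs_orthr HiH (tp (x - q) y)) _ Kp).
      by move=> _ [x' [y' [hx' ->]]]; rewrite tip hq // mul0r.
    by move=> ->; rewrite oppr0.
  by have -> : h = p by apply/eqP; rewrite -subr_eq0; apply/eqP.
- move=> k x y hx; rewrite /compress (HRI k).2.
  apply: (proj_eq HiH KS.1).
  have [Lq hq] := proj_spec HiL HcL (Rop k x) LcS.
  split.
    by apply: closed_span_sub; exists (proj ipL Lc (Rop k x)), y.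
  move=> k' hk'; rewrite -tpB.
  apply: (closed_span_min (cs_orthr HiH (tp (Rop k x - proj ipL Lc (Rop k x)) y)) _ hk').
  by move=> _ [x' [y' [hx' ->]]]; rewrite tip hq // mul0r.
Qed.
End J.

Theorem corollary5 (R : realType) (n : nat)
  (L M : lmodType R[i]) (ipL : L -> L -> R[i]) (ipM : M -> M -> R[i])
  (HL : is_hilbert ipL) (HM : is_hilbert ipM)
  (Rop : 'I_n -> L -> L) (Top : 'I_n -> M -> M)
  (HR : forall k, is_bounded_op ipL (Rop k))
  (HT : forall k, is_bounded_op ipM (Top k))
  (Lc : L -> Prop) (Mc : M -> Prop)
  (HLc : is_max_comm_space ipL Rop Lc)
  (HMc : is_max_comm_space ipM Top Mc)
  (H : lmodType R[i]) (ipH : H -> H -> R[i]) (tp : L -> M -> H)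
  (Htp : is_tensor_product ipL ipM ipH tp)
  (RI : 'I_n -> H -> H)
  (HRI : forall k, is_tensor_id ipH tp (Rop k) (RI k)) :
  (* direct sums *)
  (is_max_comm_space (sum_ip ipL ipM) (fun k => sum_op (Rop k) (Top k))
       (prod_set Lc Mc)
   /\ forall k (x : L) (y : M), Lc x -> Mc y ->
       compress (sum_ip ipL ipM) (prod_set Lc Mc) (sum_op (Rop k) (Top k)) (x, y)
       = sum_op (compress ipL Lc (Rop k)) (compress ipM Mc (Top k)) (x, y))
  /\
  (* tensor products with the identity *)
  (let K := closed_span ipH (fun h => exists x y, Lc x /\ h = tp x y) in
   is_max_comm_space ipH RI K
   /\ forall k (x : L) (y : M), Lc x ->
       compress ipH K (RI k) (tp x y) = tp (compress ipL Lc (Rop k) x) y).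
Proof.
split; first exact: (part_sum HL HM HR HT HLc HMc).
exact: (part_tensor HL HM HR HLc Htp HRI).
Qed.
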